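(* Fix $c\in\mathcal{C}'$ with $\mathcal{S}(c)\setminus\{c\}\neq\emptyset$, and fix the values of all messages $\lambda_{c'\to s}(\mathbf{x}_s)$ with $c'\neq c$. Consider the function of the block $\boldsymbol\lambda_{c,\mathcal{S}(c)}=(\lambda_{c\to s}(\mathbf{x}_s))_{s\in\mathcal{S}(c)\setminus\{c\},\mathbf{x}_s}$ $$g_c(\boldsymbol\lambda_{c,\mathcal{S}(c)})=\max_{\mathbf{x}_c}\Big[\hat\theta_c(\mathbf{x}_c)-\sum_{s\in\mathcal{S}(c)\setminus\{c\}}\lambda_{c\to s}(\mathbf{x}_s)+\lambda_c(\mathbf{x}_c)\Big]+\sum_{s\in\mathcal{S}(c)\setminus\{c\}}\max_{\mathbf{x}_s}\Big[\hat\theta_s(\mathbf{x}_s)-\gamma_s(\mathbf{x}_s)+\lambda_s^{-c}(\mathbf{x}_s)+\lambda_{c\to s}(\mathbf{x}_s)\Big].$$ For all $s\in\mathcal{S}(c)\setminus\{c\}$ and all $\mathbf{x}_s$ let $$\lambda^*_{c\to s}(\mathbf{x}_s)=-\hat\theta_s(\mathbf{x}_s)+\gamma_s(\mathbf{x}_s)-\lambda_s^{-c}(\mathbf{x}_s)+\frac{1}{|\mathcal{S}(c)\setminus\{c\}|}\max_{\mathbf{x}_{c\setminus s}}\Big[\hat\theta_c(\mathbf{x}_c)+\lambda_c(\mathbf{x}_c)+\sum_{\hat s\in\mathcal{S}(c)\setminus\{c\}}\big(\hat\theta_{\hat s}(\mathbf{x}_{\hat s})-\gamma_{\hat s}(\mathbf{x}_{\hat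 s})+\lambda^{-c}_{\hat s}(\mathbf{x}_{\hat s})\big)\Big].$$ Then $\boldsymbol\lambda^*_{c,\mathcal{S}(c)}=(\lambda^*_{c\to s}(\mathbf{x}_s))_{s\in\mathcal{S}(c)\setminus\{c\},\mathbf{x}_s}$ is a minimiser of $g_c$ (over all real-valued blocks $\boldsymbol\lambda_{c,\mathcal{S}(c)}$).
   Context: Let $\mathcal{V}=\{1,\dots,n\}$; each variable $x_i$ takes values in a finite set $\mathrm{Vals}(X_i)$, and for $s\subseteq\mathcal{V}$ write $\mathbf{x}_s=(x_i)_{i\in s}$. Let $\mathcal{C}$ be a collection of subsets of $\mathcal{V}$ with potentials $\theta_c:\prod_{i\in c}\mathrm{Vals}(X_i)\to\mathbb{R}$, $c\in\mathcal{C}$. Let $\mathcal{C}'$ be a collection of subsets of $\mathcal{V}$ (''extended clusters'') and for each $c\in\mathcal{C}'$ let $\mathcal{S}(c)$ be a collection of subsets of $c$ (possibly containing $c$ itself), such that $\mathcal{C}'\cup\bigcup_{c\in\mathcal{C}'}\mathcal{S}(c)\supseteq\mathcal{C}$. Put $\mathcal{T}=\mathcal{C}'\cup\bigcup_{c\in\mathcal{C}'}\mathcal{S}(c)$. Messages are real numbers $\lambda_{c\to s}(\mathbf{x}_s)$ for $c\in\mathcal{C}'$, $s\in\mathcal{S}(c)\setminus\{c\}$ and all $\mathbf{x}_s$. For $t\in\mathcal{T}$ define $\hat\theta_t(\mathbf{x}_t)=\mathbb{1}(t\in\mathcal{C})\theta_t(\mathbf{x}_t)$, $\gamma_t(\mathbf{x}_t)=\mathbb{1}(t\in\mathcal{C}')\sum_{\hat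 s\in\mathcal{S}(t)\setminus\{t\}}\lambda_{t\to\hat s}(\mathbf{x}_{\hat s})$, $\lambda_t(\mathbf{x}_t)=\sum_{c'\in\mathcal{C}':\,t\in\mathcal{S}(c')\setminus\{c'\}}\lambda_{c'\to t}(\mathbf{x}_t)$. For $c\in\mathcal{C}'$ and $s\in\mathcal{S}(c)\setminus\{c\}$ define $\lambda_s^{-c}(\mathbf{x}_s)=\sum_{\hat c\in\mathcal{C}':\,\hat c\neq c,\ s\in\mathcal{S}(\hat c)\setminus\{\hat c\}}\lambda_{\hat c\to s}(\mathbf{x}_s)$. *)

(* Defs.v *)
From HB Require Import structures.
From mathcomp Require Import all_boot all_order all_algebra.
Set Implicit Arguments. Unset Strict Implicit. Unset Printing Implicit Defensive.
Import Order.TTheory GRing.Theory Num.Theory.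
Local Open Scope ring_scope.

(* A configuration x_s of a subset s is represented by a full assignment
   x : asg Vals, and a function of x_s by a function on full assignments that
   depends only on the coordinates in s ("local s f"). *)

Definition asg (n : nat) (Vals : 'I_n -> finType) :=
  {dffun forall i : 'I_n, Vals i}.

Section Defs.
Variables (R : realFieldType) (n : nat) (Vals : 'I_n -> finType).
Local Notation A := (asg Vals).
Local Notation cl := {set 'I_n}.

Definition local (s : cl) (f : A -> R) : Prop :=
  forall x y : A, (forall i, i \in s -> x i = y i) -> f x = f y.

Definition agree (s : cl) (x y : A) : bool := [forall i in s, x i == y i].

(* max of F over the (finite) set of y satisfying P; 0 if that set is empty *)
Definition maxf_in (P : pred A) (F : A -> R) : R :=
  if [pick y | P y] is Some y0 then \big[Num.max/F y0]_(y | P y) F y else 0.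

Definition maxf (F : A -> R) : R := maxf_in predT F.

Variables (C C' : {set cl}) (S : cl -> {set cl}) (theta : cl -> A -> R).

Definition thetahat (t : cl) (x : A) : R := if t \in C then theta t x else 0.

(* messages: lam c s x stands for lambda_{c -> s}(x_s) *)
Definition gamma (lam : cl -> cl -> A -> R) (t : cl) (x : A) : R :=
  if t \in C' then \sum_(sh in S t :\ t) lam t sh x else 0.

Definition lam_in (lam : cl -> cl -> A -> R) (t : cl) (x : A) : R :=
  \sum_(c' in C' | t \in S c' :\ c') lam c' t x.

Definition lam_minus (lam : cl -> cl -> A -> R) (c s : cl) (x : A) : R :=
  \sum_(ch in C' | (ch != c) && (s \in S ch :\ ch)) lam ch s x.

Definition upd (lam : cl -> cl -> A -> R) (c : cl) (blk : cl -> A -> R) :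
  cl -> cl -> A -> R := fun c' s => if c' == c then blk s else lam c' s.

Definition g_c (lam : cl -> cl -> A -> R) (c : cl) (blk : cl -> A -> R) : R :=
  let l := upd lam c blk in
  maxf (fun x => thetahat c x - \sum_(s in S c :\ c) l c s x + lam_in l c x)
  + \sum_(s in S c :\ c)
      maxf (fun x => thetahat s x - gamma l s x + lam_minus l c s x + l c s x).

(* lambda^*_{c -> s}(x_s); the inner max is over x_{c \ s}, i.e. over
   assignments y agreeing with x on s (coordinates outside c are irrelevant) *)
Definition lam_star (lam : cl -> cl -> A -> R) (c : cl) (s : cl) (x : A) : R :=
  - thetahat s x + gamma lam s x - lam_minus lam c s x
  + (#|S c :\ c|%:R)^-1 *
    maxf_in (agree s x)
      (fun y => thetahat c y + lam_in lam c y
         + \sum_(sh in S c :\ c)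
             (thetahat sh y - gamma lam sh y + lam_minus lam c sh y)).

End Defs.

(* Main.v *)
Require Import Defs.
From HB Require Import structures.
From mathcomp Require Import all_boot all_order all_algebra.
From mathcomp Require Import ring lra.
Import Order.TTheory GRing.Theory Num.Theory.
Local Open Scope ring_scope.

Section Aux.
Variables (R : realFieldType) (n : nat) (Vals : 'I_n -> finType).
Local Notation A := (asg Vals).

Lemma maxf_in_ge (P : pred A) (F : A -> R) y : P y -> F y <= maxf_in P F.
Proof.
move=> Py; rewrite /maxf_in; case: pickP => [y0 Py0|/(_ y)]; last by rewrite Py.
by rewrite (bigD1 y) //= le_max lexx.
Qed.

Lemma maxf_in_le (P : pred A) (F : A -> R) b :
  (exists y, P y) -> (forall y, P y -> F y <= b) -> maxf_in P F <= b.
Proof.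
move=> [y Py] H; rewrite /maxf_in; case: pickP => [y0 Py0|/(_ y)]; last by rewrite Py.
apply: (big_rec (fun v => v <= b)); first exact: H.
by move=> i v Pi hv; rewrite ge_max hv H.
Qed.

Lemma maxf_in_ext (P Q : pred A) (F G : A -> R) :
  P =1 Q -> (forall y, F y = G y) -> maxf_in P F = maxf_in Q G.
Proof.
move=> E H; rewrite /maxf_in (eq_pick E); case: pickP => // y0 _.
by rewrite H; apply: eq_big => // y _; rewrite H.
Qed.

Lemma asg_inhab : (forall i, 0 < #|Vals i|)%N -> exists x : A, true.
Proof.
move=> h.
have /fin_all_exists [u _] : forall i, exists v : Vals i, True.
  by move=> i; have /card_gt0P [v _] := h i; exists v.
by exists (@finfun _ (fun i => Vals i) u).
Qed.

End Aux.

Theorem proposition1 (R : realFieldType) (n : nat) (Vals : 'I_n -> finType)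
  (C C' : {set {set 'I_n}}) (S : {set 'I_n} -> {set {set 'I_n}})
  (theta : {set 'I_n} -> asg Vals -> R)
  (lam : {set 'I_n} -> {set 'I_n} -> asg Vals -> R) (c : {set 'I_n}) :
  (forall i, 0 < #|Vals i|)%N ->
  (forall c', c' \in C' -> forall s, s \in S c' -> s \subset c') ->
  C \subset C' :|: \bigcup_(c' in C') S c' ->
  (forall t, t \in C -> local t (theta t)) ->
  (forall c', c' \in C' -> forall s, s \in S c' :\ c' -> local s (lam c' s)) ->
  c \in C' -> S c :\ c != set0 ->
  (forall s, s \in S c :\ c -> local s (lam_star C C' S theta lam c s))
  /\ (forall blk : {set 'I_n} -> asg Vals -> R,
        (forall s, s \in S c :\ c -> local s (blk s)) ->
        g_c C C' S theta lam c (lam_star C C' S theta lam c)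
        <= g_c C C' S theta lam c blk).
Proof.
move=> hV hsub _ hth hlam cC' hne.
have [x0 _] := @asg_inhab n Vals hV.
set K := S c :\ c.
pose a s x := thetahat C theta s x - gamma C' S lam s x + lam_minus C' S lam c s x.
pose F x := thetahat C theta c x + lam_in C' S lam c x + \sum_(sh in K) a sh x.
have gE : forall blk, g_c C C' S theta lam c blk =
  maxf (fun x => thetahat C theta c x - \sum_(s in K) blk s x + lam_in C' S lam c x)
  + \sum_(s in K) maxf (fun x => a s x + blk s x).
  move=> blk; rewrite /g_c /upd eqxx; congr (_ + _).
    apply: maxf_in_ext => // x; congr (_ + _).
    apply: eq_bigr => c' /andP[_]; rewrite in_setD1 => /andP[hc _].
    by case: eqP => // ec; rewrite ec eqxx in hc.
  apply: eq_bigr => s hs; apply: maxf_in_ext => // x.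
  have hsc : (s == c) = false by move: hs; rewrite in_setD1 => /andP[/negbTE].
  rewrite /a /gamma /lam_minus; congr (_ - _ + _ + _).
    by case: ifP => // _; apply: eq_bigr => sh _; rewrite hsc.
  by apply: eq_bigr => ch /andP[_ /andP[/negbTE -> _]].
split.
  move=> s hs x y hxy.
  have hsK : s != c /\ s \in S c by move: hs; rewrite in_setD1 => /andP[].
  rewrite /lam_star; congr (_ + _ - _ + _).
  - by rewrite /thetahat; case: ifP => // sC; rewrite (hth s sC x y hxy).
  - rewrite /gamma; case: ifP => // sC'; apply: eq_bigr => sh hsh.
    apply: (hlam s sC' sh hsh) => i hi; apply: hxy.
    move: hsh; rewrite in_setD1 => /andP[_ hsh].
    exact: (subsetP (hsub s sC' sh hsh)).
  - by apply: eq_bigr => ch /andP[chC /andP[_ hch]]; apply: (hlam ch chC s hch).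
  - congr (_ * _); apply: maxf_in_ext => // z.
    by rewrite /agree; apply: eq_forallb_in => i hi; rewrite hxy.
move=> blk _.
have kpos : (0 < #|K|)%N by rewrite card_gt0.
have k0 : (#|K|%:R : R) != 0 by rewrite pnatr_eq0 -lt0n.
pose M := maxf F.
apply: (@le_trans _ _ M).
  rewrite gE.
  have -> : M = 0 + \sum_(s in K) ((#|K|%:R)^-1 * M).
    by rewrite sumr_const -mulrnAl -(mulr_natr ((#|K|%:R)^-1 : R) #|K|) mulVf // mul1r add0r.
  apply: lerD.
    apply: maxf_in_le; first by exists x0.
    move=> x _.
    have E : thetahat C theta c x - \sum_(s in K) lam_star C C' S theta lam c s x
       + lam_in C' S lam c x = F x - (#|K|%:R)^-1 *
         \sum_(s in K) maxf_in (agree s x) F.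
      rewrite /F /lam_star.
      rewrite big_split /= big_split /= big_split /= mulr_sumr /= !sumrN.
      have -> : \sum_(i in K) gamma C' S lam i x = \sum_(i in K) gamma C' S lam i x by [].
      rewrite /a big_split /= big_split /= sumrN.
      ring.
    rewrite E subr_le0.
    have -> : F x = (#|K|%:R)^-1 * \sum_(s in K) F x.
      by rewrite sumr_const -(mulr_natl (F x) #|K|) mulrA mulVf // mul1r.
    apply: ler_wpM2l; first by rewrite invr_ge0 ler0n.
    by apply: ler_sum => s _; apply: maxf_in_ge; rewrite /agree; apply/forall_inP.
  apply: ler_sum => s hs; apply: maxf_in_le; first by exists x0.
  move=> x _.
  have -> : a s x + lam_star C C' S theta lam c s x
      = (#|K|%:R)^-1 * maxf_in (agree s x) F.
    rewrite /a /lam_star /F /a; ring.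
  apply: ler_wpM2l; first by rewrite invr_ge0 ler0n.
  apply: maxf_in_le; first by exists x; rewrite /agree; apply/forall_inP.
  by move=> y _; apply: maxf_in_ge.
apply: maxf_in_le; first by exists x0.
move=> x _; rewrite gE.
have -> : F x = (thetahat C theta c x - \sum_(s in K) blk s x + lam_in C' S lam c x)
   + \sum_(s in K) (a s x + blk s x).
  rewrite /F [in RHS]big_split /=; ring.
by apply: lerD; [apply: maxf_in_ge | apply: ler_sum => s _; apply: maxf_in_ge].
Qed.
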